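(* Let $\Gamma$ be a simplicial complex and $r\ge 3$. Suppose $v_1,\dots,v_r$ are (not necessarily distinct) vertices of $\Gamma$ such that $\{v_i,v_{i+1}\}$ is an edge of $\Gamma$ for each $1\le i\le r$ (indices mod $r$), and suppose there is at most one index $i$ (mod $r$) such that $\{v_{i-1},v_i,v_{i+1}\}\in\Gamma$. Then $\mathrm{gr}_1(\Gamma)\le r$.
   Context: A simplicial complex $\Gamma$ on a finite vertex set $V=V(\Gamma)$ is a family of subsets of $V$ (faces) closed under taking subsets; edges are faces with 2 elements. Note $\{v_{i-1},v_i,v_{i+1}\}$ is a set, so if $v_{i-1}=v_{i+1}$ it equals the edge $\{v_i,v_{i+1}\}$. For $W\subseteq V$, $\Gamma[W]=\{F\in\Gamma:F\subseteq W\}$. For a face $F$ (possibly empty), $\mathrm{lk}_\Gamma(F)=\{G\setminus F: F\subseteq G\in\Gamma\}$. Fix a field $\mathbf{k}$; $\tilde H_i(\cdot;\mathbf{k})$ is reduced simplicial homology. The $1$-girth is $\mathrm{gr}_{1}(\Gamma)=\min\{|W|: W\subseteq V(\Gamma),\ \tilde H_{1}(\mathrm{lk}_\Gamma(F)[W];\mathbf{k})\neq 0 \text{ for some face } F\in\Gamma \text{ (including } F=\emptyset)\}$, or $\infty$ if none exists. *)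

(* Defs.v *)
From HB Require Import structures.
From mathcomp Require Import all_boot all_order all_algebra.
Set Implicit Arguments. Unset Strict Implicit. Unset Printing Implicit Defensive.
Import GRing.Theory.

(* Simplicial complexes on the vertex type 'I_n (vertices ordered by value). *)
Definition is_complex (n : nat) (G : {set {set 'I_n}}) : Prop :=
  forall F H : {set 'I_n}, F \in G -> H \subset F -> H \in G.

Definition verts n (G : {set {set 'I_n}}) : {set 'I_n} := \bigcup_(F in G) F.

Definition induced n (G : {set {set 'I_n}}) (W : {set 'I_n}) : {set {set 'I_n}} :=
  [set H in G | H \subset W].

Definition link n (G : {set {set 'I_n}}) (F : {set 'I_n}) : {set {set 'I_n}} :=
  [set H :\: F | H in [set H in G | F \subset H]].

(* faces of cardinality d (i.e. of dimension d-1) *)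
Definition faces n (G : {set {set 'I_n}}) (d : nat) : {set {set 'I_n}} :=
  [set H in G | #|H| == d].

(* incidence coefficient [F : H] for H = F minus one vertex x:
   (-1)^(position of x in F), F sorted increasingly; 0 otherwise *)
Definition bd_coef (k : fieldType) n (F H : {set 'I_n}) : k :=
  if (H \subset F) && (#|F :\: H| == 1%N) then
    (\sum_(x in F :\: H) (- 1) ^+ #|[set y in F | (y < x)%N]|)%R
  else 0%R.

(* boundary matrix C_{d-1} -> C_{d-2} (row vector convention), rows indexed
   by faces with d vertices, columns by faces with d-1 vertices *)
Definition bdmx (k : fieldType) n (G : {set {set 'I_n}}) (d : nat) :
  'M[k]_(#|faces G d|, #|faces G d.-1|) :=
  \matrix_(i, j) bd_coef k (enum_val i) (enum_val j).

(* reduced homology in degree 1 over k is nonzero: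
   ker d_1 is not contained in im d_2 *)
Definition H1_nonzero (k : fieldType) n (G : {set {set 'I_n}}) : bool :=
  ~~ (kermx (bdmx k G 2) <= bdmx k G 3)%MS.

Definition gr1_witnesses (k : fieldType) n (G : {set {set 'I_n}}) : {set {set 'I_n}} :=
  [set W : {set 'I_n} | (W \subset verts G) &&
     [exists F in G, H1_nonzero k (induced (link G F) W)]].

(* 1-girth: None stands for infinity *)
Definition gr1 (k : fieldType) n (G : {set {set 'I_n}}) : option nat :=
  if gr1_witnesses k G == set0 then None
  else Some (\big[minn/n.+1]_(W in gr1_witnesses k G) #|W|).

(* Main.v *)
Require Import Defs.
From HB Require Import structures.
From mathcomp Require Import all_boot all_order all_algebra.
Import GRing.Theory.
Set Implicit Arguments. Unset Strict Implicit. Unset Printing Implicit Defensive.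

Lemma rank_lt_of_rowsum (k : fieldType) p q (A : 'M[k]_(p, q)) :
  0 < q -> (forall i, (\sum_j A i j)%R = 0%R) -> \rank A < q.
Proof.
move=> q0 hs.
set c : 'rV[k]_q := const_mx 1%R.
have hc : (c <= kermx A^T)%MS.
  apply/sub_kermxP; apply/matrixP => i j; rewrite !mxE.
  rewrite -[RHS](hs j); apply: eq_bigr => l _; by rewrite !mxE mul1r.
have := mxrankS hc; rewrite mxrank_ker mxrank_tr.
have : \rank c != 0%N.
  rewrite mxrank_eq0; apply/eqP => /matrixP /(_ ord0 (Ordinal q0)); rewrite !mxE.
  by move/eqP; rewrite oner_eq0.
case: (\rank c) => // m _ h.
by rewrite -subn_gt0; apply: leq_trans h.
Qed.

Lemma H1_of_counts (k : fieldType) n (K : {set {set 'I_n}}) :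
  #|faces K 3| = 0%N -> 0 < #|faces K 1| -> #|faces K 1| <= #|faces K 2| ->
  (forall F, F \in faces K 2 -> (\sum_(H in faces K 1) bd_coef k F H)%R = 0%R) ->
  H1_nonzero k K.
Proof.
move=> h3 h1 h12 hs; rewrite /H1_nonzero.
have hr : \rank (bdmx k K 2) < #|faces K 1|.
  apply: rank_lt_of_rowsum => // i.
  rewrite -[RHS](hs (enum_val i)) ?enum_valP // (big_enum_val (fun H => bd_coef k (enum_val i) H)).
  by apply: eq_bigr => j _; rewrite mxE.
apply/negP => hsub.
have h0 : \rank (bdmx k K 3) == 0%N.
  by rewrite -leqn0; apply: leq_trans (rank_leq_row _) _; rewrite h3.
have := mxrankS hsub; rewrite (eqP h0).
rewrite leqn0 mxrank_eq0 kermx_eq0 /row_free => /eqP hf.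
move: hr; rewrite hf => hr.
by move: (leq_trans hr h12); rewrite ltnn.
Qed.

Lemma rowsum0 (k : fieldType) n (K : {set {set 'I_n}}) F :
  is_complex K -> F \in faces K 2 ->
  (\sum_(H in faces K 1) bd_coef k F H)%R = 0%R.
Proof.
move=> hK; rewrite inE => /andP [FK /cards2P [a [b [ab eF]]]]; subst F.
wlog lab : a b ab FK / (a < b)%N.
  move=> hw; case: (ltngtP a b) => h; first exact: hw.
  - have e : [set a; b] = [set b; a] by rewrite setUC.
    rewrite e in FK *; apply: hw => //; by rewrite eq_sym.
  - by move: ab; rewrite (val_inj h) eqxx.
have Ha : [set a] \in faces K 1.
  by rewrite inE cards1 andbT; apply: hK FK _; rewrite sub1set set21.
have Hb : [set b] \in faces K 1.
  by rewrite inE cards1 andbT; apply: hK FK _; rewrite sub1set set22.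
have ab1 : [set b] != [set a].
  by apply/negP => /eqP /setP /(_ b); rewrite !inE eqxx eq_sym (negbTE ab).
rewrite (bigD1 [set a]) //= (bigD1 [set b]) /=; last by rewrite Hb ab1.
rewrite big1 ?addr0; last first.
  move=> H /andP [/andP [HK Ha'] Hb']; rewrite /bd_coef.
  case: ifP => // /andP [hsub _].
  move: HK; rewrite inE => /andP [_ /cards1P [x Hx]].
  move: hsub; rewrite Hx sub1set !inE => /orP [] /eqP hx.
    by move: Ha'; rewrite Hx hx eqxx.
  by move: Hb'; rewrite Hx hx eqxx.
have e1 : [set a; b] :\: [set a] = [set b].
  apply/setP => x; rewrite !inE; case: (eqVneq x a) => [->|] /=.
    by rewrite (negbTE ab).
  by [].
have e2 : [set a; b] :\: [set b] = [set a].
  apply/setP => x; rewrite !inE; case: (eqVneq x b) => [->|] /=.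
    by rewrite eq_sym (negbTE ab).
  by rewrite orbF.
rewrite /bd_coef e1 e2 !cards1 !eqxx !andbT.
rewrite subsetUr subsetUl.
rewrite /= !big_set1.
have -> : [set y in [set a; b] | (y < b)%N] = [set a].
  apply/setP => y; rewrite !inE; case: (eqVneq y a) => [->|ya] //=.
  by case: (eqVneq y b) => [->|//]; rewrite ltnn.
have -> : [set y in [set a; b] | (y < a)%N] = set0.
  apply/setP => y; rewrite !inE; case: (eqVneq y a) => [->|ya] /=; first by rewrite ltnn.
  case: (eqVneq y b) => [->|//] /=; by rewrite ltnNge ltnW.
by rewrite cards1 cards0 expr1 expr0 addNr.
Qed.

From Stdlib Require Import Lia.
Ltac natify := repeat match goal with
 | H : is_true (_ <= _) |- _ => move/leP: H => H
 | H : is_true (_ == _) |- _ => move/eqP: H => H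
 | H : is_true (_ != _) |- _ => move/eqP: H => H
 | |- is_true (_ <= _) => apply/leP
 | |- is_true (_ == _) => apply/eqP
 end.

Definition cs m a := if a.+1 == m then 0 else a.+1.
Definition cadj m a b : Prop :=
  b = a.+1 \/ a = b.+1 \/ (a = 0 /\ b = m.-1) \/ (b = 0 /\ a = m.-1).

Lemma cs_lt m a : a < m -> cs m a < m.
Proof. rewrite /cs; case: ifP => /eqP h hm; natify; lia. Qed.

Lemma cycle_H1 (k : fieldType) n (G : {set {set 'I_n}}) m (u : nat -> 'I_n) :
  is_complex G -> 3 <= m ->
  (forall a b, a < m -> b < m -> u a = u b -> a = b) ->
  (forall a, a < m -> [set u a; u (cs m a)] \in G) ->
  (forall a b, a < m -> b < m -> a <> b -> [set u a; u b] \in G -> cadj m a b) ->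
  (m = 3 -> [set u 0; u 1; u 2] \notin G) ->
  H1_nonzero k (induced G [set u (nat_of_ord a) | a : 'I_m]).
Proof.
move=> hG m3 hinj hedge hadj htri.
set W := [set u (nat_of_ord a) | a : 'I_m].
set K := induced G W.
have hK : is_complex K.
  move=> F H; rewrite !inE => /andP [FG FW] HF.
  by rewrite (hG F H FG HF) (subset_trans HF FW).
have inW : forall a, a < m -> u a \in W.
  by move=> a am; apply/imsetP; exists (Ordinal am).
have Wi : forall x, x \in W -> exists2 a, a < m & x = u a.
  by move=> x /imsetP [a _ ->]; exists (nat_of_ord a).
have inK : forall X, X \in G -> X \subset W -> X \in K.
  by move=> X XG XW; rewrite inE XG.
apply: H1_of_counts.
- apply/eqP; rewrite cards_eq0; apply/eqP/setP => X; rewrite !inE.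
  apply/negP => /andP [/andP [XG XW] X3].
  have [x xX] : exists x, x \in X.
    by apply/set0Pn; rewrite -card_gt0 (eqP X3).
  have : #|X :\ x| == 2.
    by rewrite (cardsD1 x X) xX in X3; rewrite -eqSS.
  move/cards2P => [y [z [yz Xe]]].
  have yX : y \in X by have := subD1set X x => /subsetP; apply; rewrite Xe !inE eqxx.
  have zX : z \in X by have := subD1set X x => /subsetP; apply; rewrite Xe !inE eqxx orbT.
  have xy : x != y.
    have : y \in X :\ x by rewrite Xe !inE eqxx.
    by rewrite !inE eq_sym => /andP [].
  have xz : x != z.
    have : z \in X :\ x by rewrite Xe !inE eqxx orbT.
    by rewrite !inE eq_sym => /andP [].
  have [a am ea] := Wi x (subsetP XW x xX).
  have [b bm eb] := Wi y (subsetP XW y yX).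
  have [c cm ec] := Wi z (subsetP XW z zX).
  subst x y z.
  have dist : forall i j, i < m -> j < m -> u i != u j -> i <> j.
    by move=> i j _ _ /eqP h hij; apply: h; rewrite hij.
  have pairG : forall i j, u i \in X -> u j \in X -> [set u i; u j] \in G.
    move=> i j hi hj; apply: hG XG _; apply/subsetP => w; rewrite !inE.
    by case/orP => /eqP ->.
  have hab := hadj a b am bm (dist _ _ am bm xy) (pairG _ _ xX yX).
  have hac := hadj a c am cm (dist _ _ am cm xz) (pairG _ _ xX zX).
  have hbc := hadj b c bm cm (dist _ _ bm cm yz) (pairG _ _ yX zX).
  have dab := dist _ _ am bm xy. have dac := dist _ _ am cm xz.
  have dbc := dist _ _ bm cm yz.
  rewrite /cadj in hab hac hbc.
  have em : m = 3 by natify; lia.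
  have hX : forall i, i < 3 -> u i \in X.
    move=> i i3; natify.
    have : i = a \/ i = b \/ i = c by lia.
    by case=> [->|[->|->]].
  move/negP: (htri em); apply; apply: hG XG _; apply/subsetP => w; rewrite !inE.
  by case/orP => [/orP [] |] /eqP ->; apply: hX.
- apply/card_gt0P; exists [set u 0]; rewrite !inE cards1 andbT.
  apply/andP; split; last by rewrite sub1set inW // (leq_trans _ m3).
  apply: hG (hedge 0 (leq_trans _ m3)) _ => //.
  by rewrite sub1set !inE eqxx.
- apply: (@leq_trans m).
    apply: (@leq_trans #|W|); last first.
      by apply: leq_trans (leq_imset_card _ _) _; rewrite card_ord.
    apply: (@leq_trans #|(fun x => [set x]) @: W|); last exact: leq_imset_card.
    apply: subset_leq_card; apply/subsetP => F; rewrite !inE => /andP [/andP [FG FW]].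
    move/cards1P => [x Fx]; apply/imsetP; exists x => //.
    by apply: (subsetP FW); rewrite Fx inE.
  have ne : forall a, a < m -> u a != u (cs m a).
    move=> a am; apply/eqP => /(hinj _ _ am (cs_lt am)); rewrite /cs.
    case: ifP => /eqP h e; natify; lia.
  set E := [set [set u (nat_of_ord a); u (cs m a)] | a : 'I_m].
  have : #|E| = m.
    rewrite card_imset ?card_ord // => a b e.
    have hs := cs_lt (ltn_ord a). have ht := cs_lt (ltn_ord b).
    have h1 : u a \in [set u (nat_of_ord b); u (cs m b)] by rewrite -e !inE eqxx.
    have h2 : u b \in [set u (nat_of_ord a); u (cs m a)] by rewrite e !inE eqxx.
    apply: val_inj => /=.
    move: h1 h2; rewrite !inE => /orP [] /eqP h1 /orP [] /eqP h2.
    + exact: hinj h1.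
    + exact: hinj h1.
    + by apply/esym; apply: hinj h2.
    + move: (hinj _ _ (ltn_ord a) ht h1) (hinj _ _ (ltn_ord b) hs h2).
      move: (ltn_ord a) (ltn_ord b); rewrite /cs.
      case: ifP => /eqP ? ; case: ifP => /eqP ? => ha hb e1 e2; natify; lia.
  move=> <-; apply: subset_leq_card; apply/subsetP => F /imsetP [a _ ->].
  rewrite !inE cards2 ne // andbT hedge //=.
  apply/subsetP => w; rewrite !inE => /orP [] /eqP ->; apply: inW => //.
  exact: cs_lt.
- by move=> F; apply: rowsum0.
Qed.

Lemma link_set0 n (G : {set {set 'I_n}}) : link G set0 = G.
Proof.
apply/setP => H; rewrite /link; apply/imsetP/idP.
  by case=> H' ; rewrite inE => /andP [H'G _] ->; rewrite setD0.
by move=> HG; exists H; rewrite ?inE ?HG ?sub0set ?setD0.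
Qed.

Lemma bigmin_le (I : finType) (P : pred I) (F : I -> nat) x j :
  P j -> \big[minn/x]_(i | P i) F i <= F j.
Proof.
move=> Pj; have : j \in index_enum I by rewrite mem_index_enum.
elim: (index_enum I) => // i s IH; rewrite inE big_cons => /orP [/eqP <-|js].
  by rewrite Pj geq_minl.
by case: ifP => _; [rewrite geq_min IH ?orbT | exact: IH].
Qed.

Lemma gr1_le (k : fieldType) n (G : {set {set 'I_n}}) (W F : {set 'I_n}) :
  W \subset verts G -> F \in G -> H1_nonzero k (induced (link G F) W) ->
  exists g, gr1 k G = Some g /\ g <= #|W|.
Proof.
move=> WV FG h.
have Win : W \in gr1_witnesses k G.
  by rewrite inE WV /=; apply/existsP; exists F; rewrite FG h.
rewrite /gr1; case: eqP => [e|_]; first by move: Win; rewrite e inE.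
exists (\big[minn/n.+1]_(W0 in gr1_witnesses k G) #|W0|); split => //.
exact: bigmin_le.
Qed.

Lemma cycle_gr1 (k : fieldType) n (G : {set {set 'I_n}}) m (u : nat -> 'I_n) :
  is_complex G -> 3 <= m ->
  (forall a b, a < m -> b < m -> u a = u b -> a = b) ->
  (forall a, a < m -> [set u a; u (cs m a)] \in G) ->
  (forall a b, a < m -> b < m -> a <> b -> [set u a; u b] \in G -> cadj m a b) ->
  (m = 3 -> [set u 0; u 1; u 2] \notin G) ->
  exists g, gr1 k G = Some g /\ g <= m.
Proof.
move=> hG m3 hinj hedge hadj htri.
have h := cycle_H1 k hG m3 hinj hedge hadj htri.
have e0 : set0 \in G by apply: hG (hedge 0 (leq_trans _ m3)) (sub0set _).
rewrite -(link_set0 G) in h.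
have [|g [-> gl]] := gr1_le _ e0 h.
  apply/subsetP => x /imsetP [a _ ->]; apply/bigcupP.
  by exists [set u (nat_of_ord a); u (cs m a)]; rewrite ?hedge // !inE eqxx.
exists g; split => //; apply: leq_trans gl _.
by apply: leq_trans (leq_imset_card _ _) _; rewrite card_ord.
Qed.

Ltac arith := natify; rewrite -?subn1 -?minusE -?plusE;
  repeat match goal with
  | H : context [Nat.pred _] |- _ => rewrite -subn1 in H
  | H : context [subn _ _] |- _ => rewrite -minusE in H
  | H : context [addn _ _] |- _ => rewrite -plusE in H
  end; lia.

Theorem mainTheorem4 (k : fieldType) (n : nat) (G : {set {set 'I_n}})
  (r : nat) (v : nat -> 'I_n) :
  is_complex G ->
  3 <= r ->
  (forall i, i < r ->
     (v i != v (i.+1 %% r)) && ([set v i; v (i.+1 %% r)] \in G)) ->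
  (forall i j, i < r -> j < r ->
     [set v ((i + r).-1 %% r); v i; v (i.+1 %% r)] \in G ->
     [set v ((j + r).-1 %% r); v j; v (j.+1 %% r)] \in G ->
     i = j) ->
  exists g, gr1 k G = Some g /\ g <= r.
Proof.
move=> hG r3 hv hT.
have r0 : 0 < r by apply: leq_trans r3.
have [s [sr hs]] : exists s, s < r /\ forall t, t < r -> t <> s ->
    [set v ((t + r).-1 %% r); v t; v (t.+1 %% r)] \notin G.
  case: (boolP [exists i : 'I_r, [set v ((i + r).-1 %% r); v i; v (i.+1 %% r)] \in G]).
    move=> /existsP [i Ti]; exists i; split => // t tr ts; apply/negP => Tt.
    by apply: ts; apply: hT tr (ltn_ord i) Tt Ti.
  by move=> /existsPn hn; exists 0; split => // t tr _; exact: (hn (Ordinal tr)).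
pose w j := v ((s + j) %% r).
have wS : forall j, w j.+1 = v (((s + j) %% r).+1 %% r).
  by move=> j; rewrite /w addnS -[((s + j) %% r).+1]addn1 modnDml addn1.
have W1 : forall j, j < r -> (w j != w j.+1) && ([set w j; w j.+1] \in G).
  by move=> j jr; rewrite wS; apply: hv; exact: ltn_pmod.
have Wr : w r = w 0 by rewrite /w addn0 modnDr.
have W3 : forall j, 0 < j -> j < r -> [set w j.-1; w j; w j.+1] \notin G.
  move=> j j0 jr; rewrite wS.
  have -> : w j.-1 = v ((((s + j) %% r) + r).-1 %% r).
    rewrite /w; congr v.
    set x := (s + j) %% r.
    have -> : (x + r).-1 = x + r.-1 by arith.
    rewrite /x modnDml.
    have -> : s + j + r.-1 = s + j.-1 + r by arith.
    by rewrite modnDr.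
  apply: hs; first exact: ltn_pmod.
  move=> h.
  have : (s + j == s + 0 %[mod r]) by rewrite addn0 h modn_small.
  rewrite eqn_modDl mod0n modn_small //; move/eqP; arith.
have sing : forall j, j <= r -> [set w j] \in G.
  have s0 : forall j, j < r -> [set w j] \in G.
    move=> j jr; have /andP [_ e] := W1 j jr.
    by apply: hG e _; rewrite sub1set set21.
  move=> j; rewrite leq_eqVlt => /orP [/eqP ->|]; last exact: s0.
  by rewrite Wr; apply: s0.
have PP : exists d, (2 <= d) &&
    [exists i : 'I_r.+1, (i + d <= r) && ([set w i; w (i + d)] \in G)].
  exists r; rewrite (leq_trans _ r3) //=; apply/existsP; exists ord0.
  by rewrite /= add0n leqnn Wr setUid sing.
case: (ex_minnP PP) => d /andP [d2 /existsP [[i ir] /= /andP [idr Rid]]] dmin.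
have nomin : forall a d', 2 <= d' -> d' < d -> a + d' <= r ->
    [set w a; w (a + d')] \notin G.
  move=> a d' h2 hd ha; apply/negP => hR.
  have ar : a < r.+1 by rewrite ltnS; apply: leq_trans ha; apply: leq_addr.
  have : d <= d'.
    by apply: dmin; rewrite h2 /=; apply/existsP; exists (Ordinal ar); rewrite /= ha hR.
  by rewrite leqNgt hd.
have injw : forall a b, a < b -> b - a < d -> i + b <= r -> w (i + a) = w (i + b) -> False.
  move=> a b ab bad ibr e.
  case: (eqVneq b a.+1) => [eb|nb].
    have iar : i + a < r by arith.
    have /andP [ne _] := W1 (i + a) iar.
    by move: ne; rewrite e eb addnS eqxx.
  have h2 : 2 <= b - a by arith.
  have h3 : i + a + (b - a) <= r by arith.
  move/negP: (nomin (i + a) (b - a) h2 bad h3); apply.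
  have -> : i + a + (b - a) = i + b by arith.
  by rewrite e setUid sing.
have adjw : forall a b, a < b -> i + b <= r -> [set w (i + a); w (i + b)] \in G ->
    b = a.+1 \/ d <= b - a.
  move=> a b ab ibr hR.
  case: (eqVneq b a.+1) => [eb|nb]; first by left.
  right; rewrite leqNgt; apply/negP => bad.
  have h2 : 2 <= b - a by arith.
  have h3 : i + a + (b - a) <= r by arith.
  move/negP: (nomin (i + a) (b - a) h2 bad h3); apply.
  have -> : i + a + (b - a) = i + b by arith.
  by [].
have dr : d <= r by apply: leq_trans idr; apply: leq_addl.
case: (eqVneq (w i) (w (i + d))) => [e|ne].
- have d3 : 3 <= d.
    rewrite ltnNge; apply/negP => d2'.
    have ed : d = 2 by arith.
    have ir1 : i.+1 < r by arith.
    move/negP: (W3 i.+1 (ltn0Sn _) ir1); apply.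
    rewrite /= -addn2 -ed -e.
    have -> : [set w i; w i.+1; w i] = [set w i; w i.+1].
      by apply/setP => x; rewrite !inE; case: (x == w i); rewrite ?orbT ?orbF.
    have iir : i < r by arith.
    by have /andP [_ ->] := W1 i iir.
  suff : exists g, gr1 k G = Some g /\ g <= d.
    by case=> g [hg gd]; exists g; split => //; apply: leq_trans gd dr.
  apply: (@cycle_gr1 k n G d (fun a => w (i + a)) hG d3).
  + move=> a b ad bd /= eab.
    case: (ltngtP a b) => // h.
      by exfalso; apply: (injw a b) => //; arith.
    by exfalso; apply: (injw b a) => //; arith.
  + move=> a ad /=; rewrite /cs; case: ifP => [/eqP ha|ha].
      rewrite addn0 e.
      have -> : i + d = (i + a).+1 by arith.
      have iar : i + a < r by arith.
      by have /andP [_ ->] := W1 (i + a) iar.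
    have -> : i + a.+1 = (i + a).+1 by arith.
    have iar : i + a < r by move/negbT: ha => ha; arith.
    by have /andP [_ ->] := W1 (i + a) iar.
  + move=> a b ad bd ab /=; rewrite /cadj.
    case: (ltngtP a b) => h.
    * move=> hR; have ibr : i + b <= r by arith.
      case: (adjw a b h ibr hR) => [hh|/leP hh]; arith.
    * rewrite setUC => hR; have iar : i + a <= r by arith.
      case: (adjw b a h iar hR) => [hh|/leP hh]; arith.
    * by move: ab; rewrite h.
  + move=> d3'; rewrite addn0 addn1 addn2.
    have ir1 : i.+1 < r by arith.
    exact: (W3 i.+1 (ltn0Sn _) ir1).
- have dlt : d < r.
    rewrite ltn_neqAle dr andbT; apply/eqP => edr.
    have i0 : i = 0 by arith.
    by move: ne; rewrite i0 add0n edr Wr eqxx.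
  have d3 : 3 <= d.+1 by [].
  suff : exists g, gr1 k G = Some g /\ g <= d.+1.
    by case=> g [hg gd]; exists g; split => //; apply: leq_trans gd dlt.
  apply: (@cycle_gr1 k n G d.+1 (fun a => w (i + a)) hG d3).
  + move=> a b ad bd /= eab.
    case: (ltngtP a b) => // h.
      case: (eqVneq (b - a) d) => [ebd|nbd].
        have a0 : a = 0 by arith.
        have bd' : b = d by arith.
        by rewrite a0 bd' addn0 in eab; move: ne; rewrite eab eqxx.
      by exfalso; apply: (injw a b) => //; arith.
    case: (eqVneq (a - b) d) => [ebd|nbd].
      have a0 : b = 0 by arith.
      have bd' : a = d by arith.
      by rewrite a0 bd' addn0 in eab; move: ne; rewrite eab eqxx.
    by exfalso; apply: (injw b a) => //; arith.
  + move=> a ad /=; rewrite /cs; case: ifP => [/eqP ha|ha].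
      have -> : a = d by arith.
      by rewrite addn0 setUC.
    have -> : i + a.+1 = (i + a).+1 by arith.
    have iar : i + a < r by move/negbT: ha => ha; arith.
    by have /andP [_ ->] := W1 (i + a) iar.
  + move=> a b ad bd ab /=; rewrite /cadj.
    case: (ltngtP a b) => h.
    * move=> hR; have ibr : i + b <= r by arith.
      case: (adjw a b h ibr hR) => [hh|/leP hh]; arith.
    * rewrite setUC => hR; have iar : i + a <= r by arith.
      case: (adjw b a h iar hR) => [hh|/leP hh]; arith.
    * by move: ab; rewrite h.
  + move=> d3'; rewrite addn0 addn1 addn2.
    have ir1 : i.+1 < r by arith.
    exact: (W3 i.+1 (ltn0Sn _) ir1).
Qed.
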